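(* Let $A$ be a finite nonempty alphabet and $\zeta:A^\omega\to A^\omega$ a bijective $\omega$-sequential function. Then for every $n\ge0$ the map $\epsilon:A^n\to A^n$, $u\mapsto\zeta(ux)[0,n]$ (independent of $x\in A^\omega$), is a bijection.
   Context: For an infinite word $z$, $z[0,n]$ denotes its prefix of length $n$. A map $\zeta:A^\omega\to A^\omega$ is $\omega$-sequential if whenever a finite word $u$ is a common prefix of $x$ and $y$, then $\zeta(x)[0,|u|]=\zeta(y)[0,|u|]$. *)

(* Defs.v *)
From mathcomp Require Import all_boot.
Set Warnings "-notation-overridden".
Set Implicit Arguments. Unset Strict Implicit. Unset Printing Implicit Defensive.

Definition oword (A : Type) := nat -> A.

Definition wprefix (A : Type) (n : nat) (z : oword A) : n.-tuple A :=
  [tuple z i | i < n].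

Definition concat (A : Type) (u : seq A) (x : oword A) : oword A :=
  fun i => if i < size u then nth (x 0) u i else x (i - size u).

Definition omega_sequential (A : Type) (zeta : oword A -> oword A) : Prop :=
  forall (u : seq A) (x y : oword A),
    wprefix (size u) x = in_tuple u -> wprefix (size u) y = in_tuple u ->
    wprefix (size u) (zeta x) = wprefix (size u) (zeta y).

(* Main.v *)
Require Import Defs.
From mathcomp Require Import all_boot.

Lemma val_wprefix (A : Type) m (z : oword A) :
  val (wprefix m z) = map z (iota 0 m).
Proof.
rewrite /wprefix /= -val_enum_ord -map_comp.
by rewrite enumT unlock.
Qed.

Lemma map_concat (A : Type) (u : seq A) x :
  map (concat u x) (iota 0 (size u)) = u.
Proof.
apply: (@eq_from_nth _ (x 0)); first by rewrite size_map size_iota.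
move=> i; rewrite size_map size_iota => Hi.
by rewrite (nth_map 0) ?size_iota // nth_iota // /concat add0n Hi.
Qed.

Theorem lemma4p5 (A : finType) (a0 : A) (zeta : oword A -> oword A) :
  bijective zeta -> omega_sequential zeta ->
  forall n : nat,
    exists eps : n.-tuple A -> n.-tuple A,
      (forall (u : n.-tuple A) (x : oword A),
          eps u = wprefix n (zeta (concat u x))) /\
      bijective eps.
Proof.
move=> [zi zK ziK] Hs n.
have Hseq : forall (u : seq A) x y, map x (iota 0 (size u)) = u ->
    map y (iota 0 (size u)) = u ->
    map (zeta x) (iota 0 (size u)) = map (zeta y) (iota 0 (size u)).
  move=> u x y Hx Hy.
  have := Hs u x y.
  rewrite -!val_wprefix.
  move=> H; have -> // := H; by apply: val_inj; rewrite val_wprefix.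
have Hind : forall (u : n.-tuple A) x y, map x (iota 0 n) = u ->
    map y (iota 0 n) = u ->
    wprefix n (zeta x) = wprefix n (zeta y).
  move=> u x y Hx Hy; apply: val_inj; rewrite !val_wprefix.
  have := Hseq u x y; rewrite size_tuple; exact.
pose eps (u : n.-tuple A) := wprefix n (zeta (concat u (fun _ => a0))).
exists eps; split.
  move=> u x; rewrite /eps; apply: (Hind u).
    by have := @map_concat _ u (fun _ => a0); rewrite size_tuple.
  by have := @map_concat _ u (x); rewrite size_tuple.
pose g (w : n.-tuple A) := wprefix n (zi (concat w (fun _ => a0))).
have epsg : cancel g eps.
  move=> w; rewrite /eps.
  have -> : wprefix n (zeta (concat (g w) (fun _ => a0)))
          = wprefix n (zeta (zi (concat w (fun _ => a0)))).
    apply: (Hind (g w)).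
      by have := @map_concat _ (g w) (fun _ => a0); rewrite size_tuple.
    by rewrite /g val_wprefix.
  rewrite ziK; apply: val_inj; rewrite val_wprefix.
  by have := @map_concat _ w (fun _ => a0); rewrite size_tuple.
have ginj : injective g := can_inj epsg.
have [g' gK g'K] := injF_bij ginj.
exists g => //.
move=> u; rewrite -{1}(g'K u) epsg; exact: g'K.
Qed.
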